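(* For $n\ge 1$, $$(\mathfrak C_0+\mathfrak C_0+\mathfrak C_0)^n=(2n-1)(n-1)\mathfrak C_{2n}+n(2n-1)(2n-3)^2\mathfrak C_{2n-2}.$$
   Context: The numbers $\mathfrak C_{2n}$ (Cauchy numbers with level $2$) are defined by $\frac{t}{{\rm arcsinh}\,t}=\sum_{n=0}^\infty\mathfrak C_{2n}\frac{t^{2n}}{(2n)!}$. Convolution notation: $(\mathfrak C_{2j_1}+\cdots+\mathfrak C_{2j_k})^n:=\sum_{i_1+\cdots+i_k=n,\ i_1,\dots,i_k\ge0}\frac{(2n)!}{(2i_1)!\cdots(2i_k)!}\mathfrak C_{2i_1+2j_1}\cdots\mathfrak C_{2i_k+2j_k}$. *)

(* Defs.v *)
From mathcomp Require Import all_boot all_algebra.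
Set Implicit Arguments. Unset Strict Implicit. Unset Printing Implicit Defensive.
Import GRing.Theory.
Local Open Scope ring_scope.

(* Coefficient of t^(2k+1) in arcsinh t, i.e. of t^(2k) in arcsinh(t)/t:
   (-1)^k (2k)! / (4^k (k!)^2 (2k+1)). *)
Definition asinh_coef (k : nat) : rat :=
  (-1) ^+ k * ((2 * k)`!)%:R / ((4 ^ k * (k`!) ^ 2 * (2 * k + 1))%N)%:R.

(* C n stands for the level-2 Cauchy number C_{2n}, i.e.
   t / arcsinh t = sum_n C n * t^(2n) / (2n)!  as formal power series,
   equivalently (arcsinh t / t) * (sum_n C n t^(2n)/(2n)!) = 1. *)
Definition cauchy2 (C : nat -> rat) : Prop :=
  forall n : nat,
    \sum_(k < n.+1) asinh_coef k * C (n - k)%N / ((2 * (n - k))`!)%:R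
    = (n == 0%N)%:R.

(* Main.v *)
Require Import Defs.
From mathcomp Require Import all_boot all_algebra.
From mathcomp Require Import ring lra zify.
Import GRing.Theory Num.Theory.
Local Open Scope ring_scope.

From HB Require Import structures.
HB.lock Definition th (p : {poly rat}) : {poly rat} := 'X * p^`().

Lemma coef_th p k : (th p)`_k = k%:R * p`_k.
Proof. rewrite th.unlock coefXM coef_deriv; case: k => [|k] /=; first by rewrite mul0r. by rewrite mulr_natl. Qed.

Lemma thM p q : th (p * q) = th p * q + p * th q.
Proof. rewrite th.unlock derivM; ring. Qed.
Lemma thD p q : th (p + q) = th p + th q.
Proof. by rewrite th.unlock derivD mulrDr. Qed.
Lemma thN p : th (- p) = - th p.
Proof. by rewrite th.unlock derivN mulrN. Qed.
Lemma thB p q : th (p - q) = th p - th q.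
Proof. by rewrite thD thN. Qed.
Lemma thMn p n : th (p *+ n) = th p *+ n.
Proof. by rewrite th.unlock derivMn mulrnAr. Qed.
Lemma th1 : th 1 = 0.
Proof. by rewrite th.unlock derivC mulr0. Qed.
Lemma thX : th 'X = 'X.
Proof. by rewrite th.unlock derivX mulr1. Qed.

Definition z (N : nat) (p : {poly rat}) := forall k, (k < N)%N -> p`_k = 0.

Lemma zD N p q : z N p -> z N q -> z N (p + q).
Proof. by move=> hp hq k hk; rewrite coefD hp // hq // addr0. Qed.
Lemma zN N p : z N p -> z N (- p).
Proof. by move=> hp k hk; rewrite coefN hp // oppr0. Qed.
Lemma zB N p q : z N p -> z N q -> z N (p - q).
Proof. by move=> hp hq; apply: zD => //; apply: zN. Qed.
Lemma zMl N p q : z N p -> z N (q * p).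
Proof.
move=> hp k hk; rewrite coefM big1 // => j _.
rewrite hp ?mulr0 //; exact: leq_ltn_trans (leq_subr j k) hk.
Qed.
Lemma zMr N p q : z N p -> z N (p * q).
Proof. by move=> hp; rewrite mulrC; apply: zMl. Qed.
Lemma zth N p : z N p -> z N (th p).
Proof. by move=> hp k hk; rewrite coef_th hp // mulr0. Qed.

Lemma sum_pick n c (f : nat -> rat) :
  \sum_(k < n.+1 | (c + k == n)%N) f k = if (c <= n)%N then f (n - c)%N else 0.
Proof.
case: leqP => h.
  have hlt : (n - c < n.+1)%N by lia.
  rewrite (big_pred1 (Ordinal hlt)) //= => k /=.
  apply/eqP/eqP => [h'|/(congr1 val) /= h']; last by lia.
  by apply: val_inj => /=; lia.
by rewrite big_pred0 // => k; apply/eqP; lia.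
Qed.

Lemma asinh_rec k : asinh_coef k.+1 * ((k%:R + 1) * (4 * k%:R + 6))
   = - (2 * k%:R + 1) ^+ 2 * asinh_coef k.
Proof.
rewrite /asinh_coef.
have e1 : (2 * k.+1)`! = ((2 * k).+2 * (2*k).+1 * (2 * k)`!)%N.
  by rewrite (_ : (2 * k.+1 = (2 * k).+2)%N) ?factS ?mulnA //; lia.
have e2 : (2 * k.+1 + 1 = (2 * k + 1) + 2)%N by lia.
rewrite e1 e2 factS expnS -(addn2 (2*k)) -(addn1 (2*k)) -(addn1 k).
rewrite !(natrM, natrD, exprS, expr0, mulr1) /=.
have h1 : (k`!)%:R != 0 :> rat by rewrite pnatr_eq0 -lt0n fact_gt0.
have h2 : (4 ^ k)%:R != 0 :> rat by rewrite pnatr_eq0 -lt0n expn_gt0.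
have h3 : (2 * k + 1)%:R != 0 :> rat by rewrite pnatr_eq0 addn1.
rewrite natrD natrM in h3.
have k0 : 0 <= k%:R :> rat by apply: ler0n.
have h4 : k%:R + 1 != 0 :> rat by apply: lt0r_neq0; lra.
have h5 : 2 * k%:R + 1 + 2 != 0 :> rat by apply: lt0r_neq0; lra.
rewrite exprD expr1.
field.
by rewrite h1 h2 h3 h4 h5.
Qed.

Lemma asinh0 : asinh_coef 0 = 1.
Proof. by rewrite /asinh_coef /= expr0 mul1r muln0. Qed.

Section M.
Variables (C : nat -> rat) (hC : cauchy2 C) (N : nat).
Let H := \poly_(k < N) asinh_coef k.
Let F := \poly_(k < N) (C k / ((2 * k)`!)%:R).
Let E := (1 + 'X) * (th (th H) *+ 4 + th H *+ 2) + 'X * (th H *+ 2 + H).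
Let P := (1 + 'X) * (th H *+ 2 + H) ^+ 2.

Lemma zE : z N E.
Proof.
move=> k hk; rewrite /E !(mulrDl, mul1r, coefD, coefMn, coefXM, coef_th, coef_poly) hk.
case: k hk => [|k] hk /=; first ring.
have hk' : (k < N)%N by lia.
rewrite hk'.
have e : (k.+1)%:R = k%:R + 1 :> rat by rewrite -natr1.
rewrite e.
apply: (@eq_trans _ _ (asinh_coef k.+1 * ((k%:R + 1) * (4 * k%:R + 6)) + (2 * k%:R + 1) ^+ 2 * asinh_coef k)); first ring.
rewrite asinh_rec; ring.
Qed.

Lemma thP : th P = (th H *+ 2 + H) * E.
Proof.
rewrite /P /E expr2 !(thM, thD, thMn, th1, thX); ring.
Qed.

Lemma zP : z N (P - 1).
Proof.
move=> k hk.
case: k hk => [|k] hk.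
  rewrite coefB coef1 /P coef0M expr2 coef0M !(coefD, coefMn, coef_th, coef1, coefX, coef_poly) hk /=.
  rewrite asinh0; ring.
have := @zMl N E (th H *+ 2 + H) zE k.+1 hk.
rewrite -thP -[th P](subr0) -th1 -thB coef_th => /eqP.
rewrite mulf_eq0 pnatr_eq0 /= => /eqP //.
Qed.

Lemma ze1 : z N (H * F - 1).
Proof.
move=> k hk; rewrite coefB coef1 coefM -(hC k); apply/eqP; rewrite subr_eq0; apply/eqP.
apply: eq_bigr => i _.
rewrite !coef_poly ifT; last by have := ltn_ord i; lia.
rewrite ifT; last by lia.
by rewrite mulrA.
Qed.

Lemma ze4 : z N (th F + F ^+ 2 * th H).
Proof.
have -> : th F + F ^+ 2 * th H = F * th (H * F - 1) - th F * (H * F - 1).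
  rewrite thB th1 thM; ring.
by apply: zB; apply: zMl; [apply: zth|]; apply: ze1.
Qed.

Lemma ze5 : z N (th (th F) - F ^+ 3 * (th H) ^+ 2 *+ 2 + F ^+ 2 * th (th H)).
Proof.
have -> : th (th F) - F ^+ 3 * (th H) ^+ 2 *+ 2 + F ^+ 2 * th (th H)
   = th (th F + F ^+ 2 * th H) - (F * th H *+ 2) * (th F + F ^+ 2 * th H).
  rewrite thD thM !expr2 !thM; ring.
by apply: zB; [apply: zth|apply: zMl]; apply: ze4.
Qed.

Let LF := (1 + 'X) * (th (th F) *+ 4) - (th F *+ 6 + 'X * th F *+ 4) + (F *+ 2 + 'X * F).

Lemma zX : z N (LF - F ^+ 3 *+ 2).
Proof.
have -> : LF - F ^+ 3 *+ 2 =
  (1 + 'X) * (th (th F) - F ^+ 3 * (th H) ^+ 2 *+ 2 + F ^+ 2 * th (th H)) *+ 4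
  - (6 + 'X *+ 4) * (th F + F ^+ 2 * th H)
  - (H * F - 1) * (- (1 + 'X) * F ^+ 2 * th (th H) *+ 4 + (6 + 'X *+ 4) * F ^+ 2 * th H + (2 + 'X) * F * (1 + F * H))
  + F ^+ 3 * ((P - 1) *+ 2 - H * E).
  rewrite /LF /P /E; ring.
have zMn : forall p n, z N p -> z N (p *+ n).
  by move=> p n hp k hk; rewrite coefMn hp // mul0rn.
apply: zD; last by apply: zMl; apply: zB; [apply: zMn; apply: zP| apply: zMl; apply: zE].
apply: zB; last by apply: zMr; apply: ze1.
apply: zB; last by apply: zMl; apply: ze4.
by apply: zMn; apply: zMl; apply: ze5.
Qed.
End M.

Theorem theorem5 (C : nat -> rat) (hC : cauchy2 C) (n : nat) (hn : (1 <= n)%N) :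
  \sum_(i < n.+1) \sum_(j < n.+1) \sum_(k < n.+1 | (i + j + k == n)%N)
     ((2 * n)`!)%:R / (((2 * i)`! * (2 * j)`! * (2 * k)`!)%N)%:R * C i * C j * C k
  = (2 * n%:R - 1) * (n%:R - 1) * C n
    + n%:R * (2 * n%:R - 1) * (2 * n%:R - 3) ^+ 2 * C n.-1.
Proof.
have hz := @zX C hC n.+1 n (ltnSn n).
set F := \poly_(k < n.+1) (C k / ((2 * k)`!)%:R) in hz.
have fnz : forall k, ((k`!)%:R : rat) != 0 by move=> k; rewrite pnatr_eq0 -lt0n fact_gt0.
have hA : \sum_(i < n.+1) \sum_(j < n.+1) \sum_(k < n.+1 | (i + j + k == n)%N)
     ((2 * n)`!)%:R / (((2 * i)`! * (2 * j)`! * (2 * k)`!)%N)%:R * C i * C j * C k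
   = ((2 * n)`!)%:R * (F ^+ 3)`_n.
  rewrite (_ : F ^+ 3 = F * (F * F)); last by rewrite !exprS expr0 mulr1.
  rewrite coefM mulr_sumr; apply: eq_bigr => i _.
  rewrite coefM (big_ord_widen n.+1 (fun j => F`_j * F`_(n - i - j))); last by lia.
  rewrite mulr_sumr mulr_sumr [RHS]big_mkcond; apply: eq_bigr => j _.
  rewrite (sum_pick n (i + j) (fun k => ((2 * n)`!)%:R / (((2 * i)`! * (2 * j)`! * (2 * k)`!)%N)%:R * C i * C j * C k)).
  have hc : (j < (n - i).+1)%N = (i + j <= n)%N by have := ltn_ord i; lia.
  rewrite hc; case: ifP => hij //.
  rewrite !coef_poly ifT; last by have := ltn_ord i; lia.
  rewrite ifT; last by have := ltn_ord j; lia.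
  rewrite ifT; last by lia.
  rewrite subnDA !natrM !invfM; ring.
rewrite hA.
rewrite !(mulrDl, mul1r, coefD, coefB, coefN, coefMn) !coef_th in hz.
rewrite !coefXM !(coefMn, coefD) !coef_th in hz.
move: hz; rewrite /F; clear hA F; case: n hn => // m _ hz.
rewrite !coef_poly ltnSn ltnW // in hz.
set T := ((\poly_(k < m.+2) (C k / ((2 * k)`!)%:R)) ^+ 3)`_m.+1 in hz *.
have e2 : (2 * m.+1 = (2 * m).+2)%N by lia.
have f0 := fnz (2 * m)%N.
move: hz f0; rewrite e2 !factS !natrM -!natr1 /= => hz f0.
pose c : rat := - ((2 * m)%:R + 1 + 1) * ((2 * m)%:R + 1) * ((2 * m)`!)%:R / 2.
move: hz => /(congr1 (fun x => x * c)); rewrite mul0r => hz.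
apply/eqP; rewrite -subr_eq0; apply/eqP; rewrite -hz /c ?natrM.
have k0 : 0 <= m%:R :> rat by apply: ler0n.
have h4 : 2 * m%:R + 1 != 0 :> rat by apply: lt0r_neq0; lra.
have h5 : 2 * m%:R + 1 + 1 != 0 :> rat by apply: lt0r_neq0; lra.
rewrite ?natrM in f0.
field.
by rewrite f0 h4 h5.
Qed.
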